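(* Let $p$ be an odd prime and let $\alpha_1,\alpha_2,\beta_2,\beta_3,\gamma_1,\gamma_3\in p\mathbb{Z}_p$ be such that the free $\mathbb{Z}_p$-module $L_A$ with basis $x_1,x_2,x_3$ and alternating bilinear bracket $[x_1,x_2]=\alpha_1x_1+\alpha_2x_2$, $[x_2,x_3]=\beta_2x_2+\beta_3x_3$, $[x_3,x_1]=\gamma_1x_1+\gamma_3x_3$ is a $\mathbb{Z}_p$-Lie algebra. Then there exist $\eta,\rho,\mu,\lambda\in p\mathbb{Z}_p$ with $\eta\rho-\mu\lambda=0$ such that $L_A$ is isomorphic to one of the following $\mathbb{Z}_p$-Lie algebras, each free of rank $3$ on $x,y,z$ with the indicated brackets: (1) $L_1(\eta,\rho,\mu,\lambda)$: $[x,y]=\eta y$, $[y,z]=\mu y$, $[z,x]=\lambda z+\rho x$; (2) $L_2(\eta,\mu)$: $[x,y]=0$, $[y,z]=\eta y+\mu z$, $[z,x]=0$; (3) $L_3(\eta,\mu)$: $[x,y]=0$, $[y,z]=\eta z$, $[z,x]=\mu z$; (4) for $\eta\mu\lambda\ne0$, $L_4(\eta,\mu,\lambda)$: $[x,y]=\eta x+\mu y$, $[y,z]=\lambda y-\eta z$, $[z,x]=-\lambda x-\mu z$; (5) for $\eta\mu\lambda\ne0$, $L_\ast(\eta,\mu,\lambda)$: $[x,y]=\eta x+\mu y$, $[y,z]=\lambda y+\eta z$, $[z,x]=\lambda x+\mu z$. *)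

(* Defs.v *)
From HB Require Import structures.
From mathcomp Require Import all_boot all_order all_algebra.
Set Implicit Arguments. Unset Strict Implicit. Unset Printing Implicit Defensive.
Import Order.TTheory GRing.Theory Num.Theory.
Local Open Scope ring_scope.

(* p-adic integers Z_p, realised as the inverse limit lim Z/p^nZ:       *)
(* an element is a sequence of integers a with a (n+1) = a n mod p^n   *)
(* ("coherent"), two sequences being equal in Z_p iff a n = b n mod p^n *)
(* for all n.  Ring operations are pointwise.                           *)

Definition padic := nat -> int.

Definition ppow (p n : nat) : int := Posz (expn p n).

Definition is_padic (p : nat) (a : padic) : Prop :=
  forall n : nat, (a n.+1 = a n %[mod ppow p n])%Z.

Definition peq (p : nat) (a b : padic) : Prop :=
  forall n : nat, (a n = b n %[mod ppow p n])%Z.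

Definition pconst (z : int) : padic := fun _ => z.
Definition pzero : padic := pconst 0.
Definition padd (a b : padic) : padic := fun n => a n + b n.
Definition pmul (a b : padic) : padic := fun n => a n * b n.
Definition popp (a : padic) : padic := fun n => - a n.
Definition psub (a b : padic) : padic := padd a (popp b).

Definition in_pZp (p : nat) (a : padic) : Prop := (Posz p %| a 1%N)%Z.

(* Z_p-Lie algebras which are free of rank 3 with basis e_0,e_1,e_2,    *)
(* given by structure constants: c i j k = coefficient of e_k in        *)
(* [e_i, e_j].                                                           *)

Definition sconst := 'I_3 -> 'I_3 -> 'I_3 -> padic.

Definition vec3 (a b c : padic) : 'I_3 -> padic :=
  fun k => match nat_of_ord k with 0%N => a | 1%N => b | _ => c end.

Definition mk_sc (u v w : 'I_3 -> padic) : sconst :=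
  fun i j k n =>
    match nat_of_ord i, nat_of_ord j with
    | 0%N, 1%N => u k n | 1%N, 0%N => - u k n
    | 1%N, 2%N => v k n | 2%N, 1%N => - v k n
    | 2%N, 0%N => w k n | 0%N, 2%N => - w k n
    | _, _ => 0
    end.

(* Jacobi identity on basis elements:
   [e_i,[e_j,e_k]] + [e_j,[e_k,e_i]] + [e_k,[e_i,e_j]] = 0 *)
Definition jacobi (p : nat) (c : sconst) : Prop :=
  forall i j k l : 'I_3,
    peq p (fun n => \sum_(m < 3) (c j k m n * c i m l n
                                 + c k i m n * c j m l n
                                 + c i j m n * c k m l n))
          pzero.

(* Isomorphism of Z_p-Lie algebras: a Z_p-linear bijection phi with
   phi(e_i) = sum_k A i k f_k (A invertible over Z_p, inverse B)
   preserving the bracket. *)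
Definition lie_iso (p : nat) (c d : sconst) : Prop :=
  exists A B : 'I_3 -> 'I_3 -> padic,
    (forall i j, is_padic p (A i j) /\ is_padic p (B i j)) /\
    (forall i j, peq p (fun n => \sum_(k < 3) A i k n * B k j n)
                       (pconst (i == j)%:R)) /\
    (forall i j, peq p (fun n => \sum_(k < 3) B i k n * A k j n)
                       (pconst (i == j)%:R)) /\
    (forall i j l, peq p (fun n => \sum_(m < 3) c i j m n * A m l n)
                         (fun n => \sum_(k < 3) \sum_(k' < 3)
                                     A i k n * A j k' n * d k k' l n)).

(* The algebras of the statement, with basis (x1,x2,x3) resp. (x,y,z). *)
Definition LA (a1 a2 b2 b3 g1 g3 : padic) : sconst :=
  mk_sc (vec3 a1 a2 pzero) (vec3 pzero b2 b3) (vec3 g1 pzero g3).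

Definition L1 (eta rho mu lam : padic) : sconst :=
  mk_sc (vec3 pzero eta pzero) (vec3 pzero mu pzero) (vec3 rho pzero lam).

Definition L2 (eta mu : padic) : sconst :=
  mk_sc (vec3 pzero pzero pzero) (vec3 pzero eta mu) (vec3 pzero pzero pzero).

Definition L3 (eta mu : padic) : sconst :=
  mk_sc (vec3 pzero pzero pzero) (vec3 pzero pzero eta) (vec3 pzero pzero mu).

Definition L4 (eta mu lam : padic) : sconst :=
  mk_sc (vec3 eta mu pzero) (vec3 pzero lam (popp eta))
        (vec3 (popp lam) pzero (popp mu)).

Definition Lstar (eta mu lam : padic) : sconst :=
  mk_sc (vec3 eta mu pzero) (vec3 pzero lam eta) (vec3 lam pzero mu).

Definition pZp_elt (p : nat) (a : padic) : Prop := is_padic p a /\ in_pZp p a.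

(* Main.v *)
Require Import Defs.
From HB Require Import structures.
From mathcomp Require Import all_boot all_order all_algebra.
From mathcomp Require Import ring zify.
From Stdlib Require Import Classical.
Set Implicit Arguments. Unset Strict Implicit. Unset Printing Implicit Defensive.
Import Order.TTheory GRing.Theory Num.Theory.

Lemma key_nat (p : nat) a b : prime p -> forall u w : nat,
  p ^ (a + b) %| u * w -> ~~ (p ^ b %| u) -> p ^ a %| w.
Proof.
move=> pr; elim: b => [|b IH] u w.
  by move=> _; rewrite expn0 dvd1n.
move=> H nd.
have p0 : 0 < p by exact: prime_gt0.
case pu: (p %| u).
  move: (divnK pu) => Eu.
  apply: (IH (u %/ p)).
    by rewrite -(@dvdn_pmul2l p) // mulnA (mulnC p (u %/ p)) Eu -expnS -addnS.
  apply: contra nd => Hd; rewrite -Eu expnS mulnC dvdn_pmul2r //.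
have cop : coprime (p ^ (a + b.+1)) u.
  by apply: coprimeXl; rewrite prime_coprime // pu.
rewrite (Gauss_dvdr _ cop) in H.
apply: dvdn_trans H; by rewrite dvdn_exp2l // leq_addr.
Qed.

Local Open Scope ring_scope.

Lemma key_int (p : nat) a b (u w : int) : prime p ->
  (ppow p (a + b) %| u * w)%Z -> ~~ (ppow p b %| u)%Z -> (ppow p a %| w)%Z.
Proof.
move=> pr; rewrite !dvdzE abszM /ppow /=; exact: key_nat.
Qed.

Definition Zq (p : nat) (f : nat -> int) := forall n, (ppow p n %| f n)%Z.

Lemma modP (d x y : int) : (x = y %[mod d])%Z <-> (d %| x - y)%Z.
Proof. by rewrite -eqz_mod_dvd; split => [->|/eqP]. Qed.

Lemma peqZ p a b : peq p a b <-> Zq p (fun n => a n - b n).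
Proof. by split => H n; apply/modP; apply: H. Qed.

Lemma padicZ p a : is_padic p a <-> forall n, (ppow p n %| a n.+1 - a n)%Z.
Proof. by split => H n; apply/modP; apply: H. Qed.

Lemma ppow_dvd p n m : (ppow p n %| ppow p (n + m))%Z.
Proof. by rewrite dvdzE /ppow /= dvdn_exp2l // leq_addr. Qed.

Lemma coh p x : is_padic p x -> forall n m, (ppow p n %| x (n + m)%N - x n)%Z.
Proof.
move/padicZ=> H n; elim=> [|m IH]; first by rewrite addn0 subrr dvdz0.
have -> : x (n + m.+1)%N - x n = (x (n + m).+1 - x (n + m)%N) + (x (n + m)%N - x n).
  by rewrite addnS; ring.
apply: rpredD => //; exact: dvdz_trans (ppow_dvd p n m) (H _).
Qed.

Lemma domain p x y : prime p -> is_padic p x -> is_padic p y ->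
  Zq p (fun n => x n * y n) -> Zq p x \/ Zq p y.
Proof.
move=> pr hx hy hxy.
case: (classic (Zq p x)) => [|nx]; first by left.
right; have [n0 hn0] := not_all_ex_not _ _ nx.
move=> n.
have nd : ~~ (ppow p n0 %| x (n0 + n)%N)%Z.
  apply/negP => hd; apply: hn0.
  have -> : x n0 = x (n0 + n)%N - (x (n0 + n)%N - x n0) by ring.
  by apply: rpredB => //; apply: coh.
have := hxy (n0 + n)%N; rewrite addnC => h.
rewrite addnC in nd.
have hy' := key_int pr h nd.
have -> : y n = y (n + n0)%N - (y (n + n0)%N - y n) by ring.
by apply: rpredB => //; apply: coh.
Qed.

Lemma padic_add p a b : is_padic p a -> is_padic p b -> is_padic p (fun n => a n + b n).
Proof.
move=> /padicZ ha /padicZ hb; apply/padicZ => n.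
have -> : a n.+1 + b n.+1 - (a n + b n) = (a n.+1 - a n) + (b n.+1 - b n) by ring.
exact: rpredD.
Qed.
Lemma padic_opp p a : is_padic p a -> is_padic p (fun n => - a n).
Proof.
move=> /padicZ ha; apply/padicZ => n.
have -> : - a n.+1 - - a n = - (a n.+1 - a n) by ring.
by rewrite rpredN.
Qed.
Lemma padic_mul p a b : is_padic p a -> is_padic p b -> is_padic p (fun n => a n * b n).
Proof.
move=> /padicZ ha /padicZ hb; apply/padicZ => n.
have -> : a n.+1 * b n.+1 - a n * b n = a n.+1 * (b n.+1 - b n) + (a n.+1 - a n) * b n by ring.
apply: rpredD; [exact: dvdz_mull | exact: dvdz_mulr].
Qed.

Lemma Zq_comb p f g (u v : nat -> int) (h : nat -> int) : Zq p f -> Zq p g ->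
  (forall n, h n = u n * f n + v n * g n) -> Zq p h.
Proof. move=> hf hg E n; rewrite E; apply: rpredD; exact: dvdz_mull. Qed.

Lemma Zq_ext p f h : Zq p f -> (forall n, h n = f n) -> Zq p h.
Proof. by move=> hf E n; rewrite E. Qed.


Lemma sum_delta (F : 'I_3 -> int) (a : 'I_3) :
  \sum_(k < 3) (k == a)%:R * F k = F a.
Proof.
rewrite (bigD1 a) //= eqxx mul1r big1 ?addr0 // => k /negbTE ->.
by rewrite mul0r.
Qed.

Lemma lie_iso_perm p (c d : sconst) (s t : 'I_3 -> 'I_3) :
  cancel s t -> cancel t s ->
  (forall i j l, peq p (c i j l) (d (s i) (s j) (s l))) -> lie_iso p c d.
Proof.
move=> st ts H.
exists (fun i k => pconst (k == s i)%:R), (fun i k => pconst (k == t i)%:R).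
split; first by move=> i j; split => n.
split.
  move=> i j n; rewrite /pconst sum_delta st eq_sym //.
split.
  move=> i j n; rewrite /pconst sum_delta ts eq_sym //.
move=> i j l n; rewrite /pconst.
have E : forall m : 'I_3, (l == s m) = (m == t l).
  by move=> m; apply/eqP/eqP => [->|->]; rewrite ?st ?ts.
under eq_bigr do rewrite E mulrC.
rewrite sum_delta.
have -> : \sum_(k < 3) \sum_(k' < 3) (k == s i)%:R * (k' == s j)%:R * d k k' l n
   = \sum_(k < 3) (k == s i)%:R * \sum_(k' < 3) ((k' == s j)%:R * d k k' l n).
  by apply: eq_bigr => k _; rewrite big_distrr; apply: eq_bigr => k' _; rewrite -mulrA.
rewrite sum_delta sum_delta.
have := H i j (t l) n; by rewrite ts.
Qed.


Lemma ppowD p a b : ppow p (a + b) = ppow p a * ppow p b.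
Proof. by rewrite /ppow expnD PoszM. Qed.

Lemma ppow1 p : ppow p 1 = Posz p.
Proof. by rewrite /ppow expn1. Qed.

Lemma ppow_neq0 p k : prime p -> ppow p k != 0.
Proof. move=> pr; rewrite /ppow eqz_nat expn_eq0 negb_and -lt0n prime_gt0 //. Qed.

Lemma val_dec p x : prime p -> is_padic p x -> ~ Zq p x ->
  exists k u, is_padic p u /\ ~~ (Posz p %| u 1%N)%Z /\
              Zq p (fun n => x n - ppow p k * u n).
Proof.
move=> pr hx nx.
have [n0 hn0] := not_all_ex_not _ _ nx.
have exP : exists n, (fun n => ~~ (ppow p n %| x n)%Z) n by exists n0; apply/negP.
case: (ex_minnP exP) => N hN hmin.
have N0 : (0 < N)%N.
  case: N hN {hmin} => // /negP []; by rewrite /ppow expn0 dvd1z.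
set k := N.-1.
have dk : (ppow p k %| x k)%Z.
  apply/negPn/negP => hk; have := hmin _ hk; rewrite /k; lia.
have dkm : forall m, (ppow p k %| x (m + k)%N)%Z.
  move=> m; have -> : x (m + k)%N = x (k + m)%N - x k + x k by rewrite addnC; ring.
  by apply: rpredD => //; apply: coh.
exists k, (fun n => (x (n + k)%N %/ ppow p k)%Z).
have E : forall n, ppow p k * (x (n + k)%N %/ ppow p k)%Z = x (n + k)%N.
  by move=> n; rewrite mulrC divzK.
split.
  apply/padicZ => n.
  rewrite -(@dvdz_mul2l (ppow p k)) ?ppow_neq0 // mulrBr !E -ppowD.
  have -> : (n.+1 + k)%N = ((n + k) + 1)%N by lia.
  rewrite (addnC k n); exact: coh.
split.
  apply/negP => hd; move/negP: hN; apply.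
  have -> : N = (1 + k)%N by rewrite /k add1n prednK.
  rewrite -E ppowD ppow1 mulrC; exact: dvdz_mul hd (dvdzz _).
move=> n; rewrite E.
have -> : x n - x (n + k)%N = - (x (n + k)%N - x n) by ring.
by rewrite rpredN; apply: coh.
Qed.

Lemma unit_inv p u : prime p -> is_padic p u -> ~~ (Posz p %| u 1%N)%Z ->
  exists w, is_padic p w /\ Zq p (fun n => u n * w n - 1).
Proof.
move=> pr hu nu.
have cop : forall n, coprimez (u n) (ppow p n).
  case=> [|n]; first by rewrite /ppow expn0 coprimezE coprimen1.
  rewrite coprimezE /ppow /= coprime_pexpr // coprime_sym prime_coprime //.
  apply: contra nu; rewrite -[X in (X %| _)%N]/(`|Posz p|%N) -dvdzE => hd.
  have -> : u 1%N = u (1 + n)%N - (u (1 + n)%N - u 1%N) by ring.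
  by apply: rpredB; rewrite // -ppow1; apply: coh.
pose w n := (egcdz (u n) (ppow p n)).1.
have Hw : forall n, (ppow p n %| u n * w n - 1)%Z.
  move=> n; rewrite /w; case: (egcdzP (u n) (ppow p n)) => a b E _ /=.
  rewrite (eqP (cop n)) in E.
  have -> : u n * a - 1 = - (b * ppow p n) by rewrite -E; ring.
  by rewrite rpredN dvdz_mull.
exists w; split => //.
apply/padicZ => n.
have cop' : coprimez (ppow p n) (u n) by rewrite coprimez_sym.
rewrite -(Gauss_dvdzr _ cop').
have -> : u n * (w n.+1 - w n) =
   (u n.+1 * w n.+1 - 1) - (u n.+1 - u n) * w n.+1 - (u n * w n - 1) by ring.
apply: rpredB; last exact: Hw.
apply: rpredB; last by apply: dvdz_mulr; have := coh hu n 1; rewrite addn1.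
have := ppow_dvd p n 1; rewrite addn1 => h; exact: dvdz_trans h (Hw _).
Qed.


Lemma div_core p x y z kx ky kz ux uy uz wx : prime p ->
  is_padic p uy -> is_padic p uz -> is_padic p wx ->
  Zq p (fun n => x n - ppow p kx * ux n) ->
  Zq p (fun n => y n - ppow p ky * uy n) ->
  Zq p (fun n => z n - ppow p kz * uz n) ->
  Zq p (fun n => ux n * wx n - 1) ->
  (kx <= ky)%N -> (kx <= kz)%N -> (1 <= ky)%N ->
  exists rho, pZp_elt p rho /\ Zq p (fun n => x n * rho n - y n * z n).
Proof.
move=> pr huy huz hwx Hx Hy Hz Hw l1 l2 l3.
set e := (ky + kz - kx)%N.
exists (fun n => ppow p e * (uy n * uz n * wx n)).
split.
  split.
    apply: (@padic_mul p (pconst (ppow p e))); first by move=> n.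
    by apply: padic_mul => //; apply: padic_mul.
  rewrite /in_pZp; apply: dvdz_mulr.
  rewrite dvdzE /ppow /=; apply: dvdn_exp => //; rewrite /e; lia.
have HP : ppow p kx * ppow p e = ppow p ky * ppow p kz.
  by rewrite -!ppowD /e; congr ppow; lia.
move=> n.
have -> : x n * (ppow p e * (uy n * uz n * wx n)) - y n * z n =
  (x n - ppow p kx * ux n) * (ppow p e * (uy n * uz n * wx n))
  + (ppow p kx * ppow p e) * (uy n * uz n) * (ux n * wx n - 1)
  - (y n - ppow p ky * uy n) * z n
  - ppow p ky * uy n * (z n - ppow p kz * uz n)
  + (ppow p kx * ppow p e - ppow p ky * ppow p kz) * (uy n * uz n) by ring.
rewrite HP subrr mul0r addr0.
apply: rpredB; last exact: dvdz_mull.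
apply: rpredB; last exact: dvdz_mulr.
apply: rpredD; [exact: dvdz_mulr | exact: dvdz_mull].
Qed.

Lemma k_pos p y k u : pZp_elt p y -> Zq p (fun n => y n - ppow p k * u n) ->
  ~~ (Posz p %| u 1%N)%Z -> (1 <= k)%N.
Proof.
move=> [_ hy] H nu; case: k H => // H; case/negP: nu.
have := H 1%N; rewrite ppow1 /ppow expn0 mul1r => h.
have -> : u 1%N = y 1%N - (y 1%N - u 1%N) by ring.
exact: rpredB.
Qed.

Lemma div3 p x y z : prime p -> pZp_elt p x -> pZp_elt p y -> pZp_elt p z ->
  ~ Zq p x -> ~ Zq p y -> ~ Zq p z ->
  (exists rho, pZp_elt p rho /\ Zq p (fun n => x n * rho n - y n * z n)) \/
  (exists rho, pZp_elt p rho /\ Zq p (fun n => y n * rho n - z n * x n)) \/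
  (exists rho, pZp_elt p rho /\ Zq p (fun n => z n * rho n - x n * y n)).
Proof.
move=> pr hx hy hz nx ny nz.
have [kx [ux [hux [nux Hx]]]] := val_dec pr hx.1 nx.
have [ky [uy [huy [nuy Hy]]]] := val_dec pr hy.1 ny.
have [kz [uz [huz [nuz Hz]]]] := val_dec pr hz.1 nz.
have [wx [hwx Hwx]] := unit_inv pr hux nux.
have [wy [hwy Hwy]] := unit_inv pr huy nuy.
have [wz [hwz Hwz]] := unit_inv pr huz nuz.
have kx1 := k_pos hx Hx nux.
have ky1 := k_pos hy Hy nuy.
have kz1 := k_pos hz Hz nuz.
case: (boolP ((kx <= ky) && (kx <= kz))%N) => [/andP [l1 l2]|n1].
  by left; apply: (div_core pr huy huz hwx Hx Hy Hz Hwx).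
case: (boolP ((ky <= kz) && (ky <= kx))%N) => [/andP [l1 l2]|n2].
  by right; left; apply: (div_core pr huz hux hwy Hy Hz Hx Hwy).
right; right; apply: (div_core pr hux huy hwz Hz Hx Hy Hwz); lia.
Qed.


Definition o0 : 'I_3 := @Ordinal 3 0 isT.
Definition o1 : 'I_3 := @Ordinal 3 1 isT.
Definition o2 : 'I_3 := @Ordinal 3 2 isT.

Definition sA (i : 'I_3) : 'I_3 :=
  match nat_of_ord i with 0%N => o2 | 1%N => o0 | _ => o1 end.
Definition sB (i : 'I_3) : 'I_3 :=
  match nat_of_ord i with 0%N => o1 | 1%N => o2 | _ => o0 end.

Lemma sAB : cancel sA sB.
Proof. by move=> [[|[|[|i]]] Hi] //; apply: val_inj. Qed.
Lemma sBA : cancel sB sA.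
Proof. by move=> [[|[|[|i]]] Hi] //; apply: val_inj. Qed.

Lemma shiftA a1 a2 b2 b3 g1 g3 i j l :
  LA a1 a2 b2 b3 g1 g3 i j l = LA b2 b3 g3 g1 a2 a1 (sA i) (sA j) (sA l).
Proof.
by case: i => [[|[|[|i]]] Hi] //; case: j => [[|[|[|j]]] Hj] //;
   case: l => [[|[|[|l]]] Hl].
Qed.

Lemma shiftB a1 a2 b2 b3 g1 g3 i j l :
  LA a1 a2 b2 b3 g1 g3 i j l = LA g3 g1 a1 a2 b3 b2 (sB i) (sB j) (sB l).
Proof.
by case: i => [[|[|[|i]]] Hi] //; case: j => [[|[|[|j]]] Hj] //;
   case: l => [[|[|[|l]]] Hl].
Qed.

Definition Zd p (a b : padic) := Zq p (fun n => a n - b n).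

Lemma LA_peq p a1 a2 b2 b3 g1 g3 a1' a2' b2' b3' g1' g3' :
  Zd p a1 a1' -> Zd p a2 a2' -> Zd p b2 b2' -> Zd p b3 b3' -> Zd p g1 g1' -> Zd p g3 g3' ->
  forall i j l, peq p (LA a1 a2 b2 b3 g1 g3 i j l) (LA a1' a2' b2' b3' g1' g3' i j l).
Proof.
move=> h1 h2 h3 h4 h5 h6 i j l; apply/peqZ => n.
case: i => [[|[|[|i]]] Hi] //; case: j => [[|[|[|j]]] Hj] //;
   case: l => [[|[|[|l]]] Hl] //; rewrite /LA /mk_sc /vec3 /pzero /=;
   rewrite ?subrr ?dvdz0 // -?opprD ?rpredN //; apply: h1 || apply: h2 || apply: h3
   || apply: h4 || apply: h5 || apply: h6.
Qed.


Lemma peq_trans p a b c : peq p a b -> peq p b c -> peq p a c.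
Proof. by move=> h1 h2 n; rewrite (h1 n) (h2 n). Qed.

Lemma Zd_refl p x : Zd p x x.
Proof. by move=> n; rewrite subrr dvdz0. Qed.
Lemma Zd_oo p x : Zd p x (popp (popp x)).
Proof. by move=> n; rewrite /popp opprK subrr dvdz0. Qed.
Lemma Zd0 p x : Zq p x -> Zd p x pzero.
Proof. by move=> h n; rewrite /pzero /pconst subr0. Qed.

Lemma cons_ok p x r y z f : Zq p f -> (forall n, x n * r n - y n * z n = f n) ->
  peq p (psub (pmul x r) (pmul y z)) pzero.
Proof.
move=> hf E; apply/peqZ => n; rewrite /psub /padd /pmul /popp /pzero /pconst subr0.
by rewrite E.
Qed.
Lemma cons_okN p x r y z f : Zq p f -> (forall n, x n * r n - y n * z n = - f n) ->
  peq p (psub (pmul x r) (pmul y z)) pzero.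
Proof.
move=> hf E; apply/peqZ => n; rewrite /psub /padd /pmul /popp /pzero /pconst subr0.
by rewrite E rpredN.
Qed.

Lemma dom' p x y : prime p -> is_padic p x -> is_padic p y ->
  Zq p (fun n => x n * y n) -> ~ Zq p x -> Zq p y.
Proof. by move=> pr hx hy h nx; case: (domain pr hx hy h). Qed.

Lemma nz3 p x y z : prime p -> pZp_elt p x -> pZp_elt p y -> pZp_elt p z ->
  ~ Zq p x -> ~ Zq p y -> ~ Zq p z -> ~ peq p (pmul x (pmul y z)) pzero.
Proof.
move=> pr [hx _] [hy _] [hz _] nx ny nz /peqZ H.
have H' : Zq p (fun n => x n * (y n * z n)).
  by move=> n; have := H n; rewrite /pzero /pconst subr0.
have hyz : is_padic p (fun n => y n * z n) := padic_mul hy hz.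
have := dom' pr hx hyz H' nx => h2.
by apply: nz; apply: (dom' pr hy hz h2 ny).
Qed.

Lemma pZp_opp p x : pZp_elt p x -> pZp_elt p (popp x).
Proof. by move=> [hx hi]; split; [exact: padic_opp | rewrite /in_pZp /popp rpredN]. Qed.

Lemma nZ_opp p x : ~ Zq p x -> ~ Zq p (popp x).
Proof. by move=> nx h; apply: nx => n; have := h n; rewrite /popp rpredN. Qed.

Lemma Lstar_LA e m l : Lstar e m l = LA e m l e l m. Proof. by []. Qed.
Lemma L4_LA e m l : L4 e m l = LA e m l (popp e) (popp l) (popp m). Proof. by []. Qed.
Lemma L1_LA e r m l : L1 e r m l = LA pzero e m pzero r l. Proof. by []. Qed.

Definition concl p c (K : padic -> padic -> padic -> sconst) :=
  exists eta rho mu lam : padic,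
    pZp_elt p eta /\ pZp_elt p rho /\ pZp_elt p mu /\ pZp_elt p lam /\
    peq p (psub (pmul eta rho) (pmul mu lam)) pzero /\
    ~ peq p (pmul eta (pmul mu lam)) pzero /\ lie_iso p c (K eta mu lam).

Lemma final_star p c e m l : prime p ->
  pZp_elt p e -> pZp_elt p m -> pZp_elt p l ->
  ~ Zq p e -> ~ Zq p m -> ~ Zq p l ->
  (forall i j k, peq p (c i j k) (Lstar e m l i j k)) -> concl p c Lstar.
Proof.
move=> pr he hm hl ne nm nl H.
case: (div3 pr he hm hl ne nm nl) => [[r [hr Hr]]|[[r [hr Hr]]|[r [hr Hr]]]].
- exists e, r, m, l; do 4 split => //.
  split; first by apply: (cons_ok Hr).
  split; first exact: nz3.
  by apply: (@lie_iso_perm p c _ (fun i => i) (fun i => i)).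
- exists m, r, l, e; do 4 split => //.
  split; first by apply: (cons_ok Hr).
  split; first exact: nz3.
  apply: (lie_iso_perm sBA sAB) => i j k.
  by have := H i j k; rewrite !Lstar_LA shiftB.
- exists l, r, e, m; do 4 split => //.
  split; first by apply: (cons_ok Hr).
  split; first exact: nz3.
  apply: (lie_iso_perm sAB sBA) => i j k.
  by have := H i j k; rewrite !Lstar_LA shiftA.
Qed.

Lemma final_4 p c e m l : prime p ->
  pZp_elt p e -> pZp_elt p m -> pZp_elt p l ->
  ~ Zq p e -> ~ Zq p m -> ~ Zq p l ->
  (forall i j k, peq p (c i j k) (L4 e m l i j k)) -> concl p c L4.
Proof.
move=> pr he hm hl ne nm nl H.
case: (div3 pr he hm hl ne nm nl) => [[r [hr Hr]]|[[r [hr Hr]]|[r [hr Hr]]]].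
- exists e, r, m, l; do 4 split => //.
  split; first by apply: (cons_ok Hr).
  split; first exact: nz3.
  by apply: (@lie_iso_perm p c _ (fun i => i) (fun i => i)).
- exists (popp m), r, (popp l), e.
  split; first exact: pZp_opp. split; first done. split; first exact: pZp_opp. split; first done.
  split; first by apply: (cons_okN Hr) => n; rewrite /popp; ring.
  split; first by apply: nz3 => //; try exact: pZp_opp; exact: nZ_opp.
  apply: (lie_iso_perm sBA sAB) => i j k.
  apply: peq_trans (H i j k) _; rewrite !L4_LA shiftB.
  apply: LA_peq; (exact: Zd_refl || exact: Zd_oo).
- exists l, r, (popp e), (popp m).
  split; first done. split; first done. split; first exact: pZp_opp. split; first exact: pZp_opp.
  split; first by apply: (cons_ok Hr) => n; rewrite /popp; ring.
  split; first by apply: nz3 => //; try exact: pZp_opp; exact: nZ_opp.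
  apply: (lie_iso_perm sAB sBA) => i j k.
  apply: peq_trans (H i j k) _; rewrite !L4_LA shiftA.
  apply: LA_peq; (exact: Zd_refl || exact: Zd_oo).
Qed.


Theorem mainTheorem19 (p : nat) (a1 a2 b2 b3 g1 g3 : padic) :
  prime p -> odd p ->
  pZp_elt p a1 -> pZp_elt p a2 -> pZp_elt p b2 -> pZp_elt p b3 ->
  pZp_elt p g1 -> pZp_elt p g3 ->
  jacobi p (LA a1 a2 b2 b3 g1 g3) ->
  exists eta rho mu lam : padic,
    pZp_elt p eta /\ pZp_elt p rho /\ pZp_elt p mu /\ pZp_elt p lam /\
    peq p (psub (pmul eta rho) (pmul mu lam)) pzero /\
    (lie_iso p (LA a1 a2 b2 b3 g1 g3) (L1 eta rho mu lam) \/
     lie_iso p (LA a1 a2 b2 b3 g1 g3) (L2 eta mu) \/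
     lie_iso p (LA a1 a2 b2 b3 g1 g3) (L3 eta mu) \/
     (~ peq p (pmul eta (pmul mu lam)) pzero /\
      lie_iso p (LA a1 a2 b2 b3 g1 g3) (L4 eta mu lam)) \/
     (~ peq p (pmul eta (pmul mu lam)) pzero /\
      lie_iso p (LA a1 a2 b2 b3 g1 g3) (Lstar eta mu lam))).
Proof.
move=> pr _ p1 p2 p3 p4 p5 p6 HJ.
have ha1 := p1.1; have ha2 := p2.1; have hb2 := p3.1; have hb3 := p4.1;
have hg1 := p5.1; have hg3 := p6.1.
have J1 : Zq p (fun n => a1 n * b2 n - b3 n * g1 n).
  have := HJ o0 o1 o2 o0; move/peqZ => J; apply: (Zq_ext J) => n.
  rewrite !big_ord_recl big_ord0 /LA /mk_sc /vec3 /pzero /pconst /=; ring.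
have J2 : Zq p (fun n => g3 n * b2 n - g1 n * a2 n).
  have := HJ o0 o1 o2 o1; move/peqZ => J; apply: (Zq_ext J) => n.
  rewrite !big_ord_recl big_ord0 /LA /mk_sc /vec3 /pzero /pconst /=; ring.
have J3 : Zq p (fun n => a1 n * g3 n - a2 n * b3 n).
  have := HJ o0 o1 o2 o2; move/peqZ => J; apply: (Zq_ext J) => n.
  rewrite !big_ord_recl big_ord0 /LA /mk_sc /vec3 /pzero /pconst /=; ring.

case: (classic (Zq p a1 /\ Zq p b3)) => [[z1 z2]|n13].
  exists a2, g1, b2, g3; do 4 (split; first done).
  split; first by apply: (cons_okN J2) => n; ring.
  left; apply: (@lie_iso_perm p _ _ (fun i => i) (fun i => i)) => // i j k.
  rewrite L1_LA; apply: LA_peq; (exact: Zd_refl || exact: Zd0).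
case: (classic (Zq p b2 /\ Zq p g1)) => [[z1 z2]|n2].
  exists b3, a2, g3, a1; do 4 (split; first done).
  split; first by apply: (cons_okN J3) => n; ring.
  left; apply: (lie_iso_perm sAB sBA) => i j k.
  rewrite shiftA L1_LA; apply: LA_peq; (exact: Zd_refl || exact: Zd0).
case: (classic (Zq p g3 /\ Zq p a2)) => [[z1 z2]|n3].
  exists g1, b3, a1, b2; do 4 (split; first done).
  split; first by apply: (cons_okN J1) => n; ring.
  left; apply: (lie_iso_perm sBA sAB) => i j k.
  rewrite shiftB L1_LA; apply: LA_peq; (exact: Zd_refl || exact: Zd0).
have na1 : ~ Zq p a1.
  move=> z1; have nb3 : ~ Zq p b3 by move=> z; apply: n13.
  have zg1 : Zq p g1.
    apply: (dom' pr hb3 hg1 _ nb3).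
    by apply: (Zq_comb (u := fun n => b2 n) (v := fun n => -1) z1 J1) => n; ring.
  have nb2 : ~ Zq p b2 by move=> z; apply: n2.
  have zg3 : Zq p g3.
    apply: (dom' pr hb2 hg3 _ nb2).
    by apply: (Zq_comb (u := fun n => a2 n) (v := fun n => 1) zg1 J2) => n; ring.
  have na2 : ~ Zq p a2 by move=> z; apply: n3.
  apply: nb3; apply: (dom' pr ha2 hb3 _ na2).
  by apply: (Zq_comb (u := fun n => a1 n) (v := fun n => -1) zg3 J3) => n; ring.
have nb3 : ~ Zq p b3.
  move=> z3.
  have zb2 : Zq p b2.
    apply: (dom' pr ha1 hb2 _ na1).
    by apply: (Zq_comb (u := fun n => g1 n) (v := fun n => 1) z3 J1) => n; ring.
  have ng1 : ~ Zq p g1 by move=> z; apply: n2.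
  have za2 : Zq p a2.
    apply: (dom' pr hg1 ha2 _ ng1).
    by apply: (Zq_comb (u := fun n => g3 n) (v := fun n => -1) zb2 J2) => n; ring.
  have ng3 : ~ Zq p g3 by move=> z; apply: n3.
  apply: ng3; apply: (dom' pr ha1 hg3 _ na1).
  by apply: (Zq_comb (u := fun n => b3 n) (v := fun n => 1) za2 J3) => n; ring.
have nb2 : ~ Zq p b2.
  move=> z; have ng1 : ~ Zq p g1 by move=> z'; apply: n2.
  apply: nb3; apply: (dom' pr hg1 hb3 _ ng1).
  by apply: (Zq_comb (u := fun n => a1 n) (v := fun n => -1) z J1) => n; ring.
have ng1 : ~ Zq p g1.
  move=> z; apply: na1; apply: (dom' pr hb2 ha1 _ nb2).
  by apply: (Zq_comb (u := fun n => b3 n) (v := fun n => 1) z J1) => n; ring.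
have ng3 : ~ Zq p g3.
  move=> z; have na2 : ~ Zq p a2 by move=> z'; apply: n3.
  apply: ng1; apply: (dom' pr ha2 hg1 _ na2).
  by apply: (Zq_comb (u := fun n => b2 n) (v := fun n => -1) z J2) => n; ring.
have na2 : ~ Zq p a2.
  move=> z; apply: ng3; apply: (dom' pr hb2 hg3 _ nb2).
  by apply: (Zq_comb (u := fun n => g1 n) (v := fun n => 1) z J2) => n; ring.
have hK : is_padic p (fun n => b3 n * g3 n - a1 n * a2 n) :=
  padic_add (padic_mul hb3 hg3) (padic_opp (padic_mul ha1 ha2)).
have zK : Zq p (fun n => b3 n * g3 n - a1 n * a2 n).
  apply: (dom' pr hg1 hK _ ng1).
  by apply: (Zq_comb (u := fun n => - g3 n) (v := fun n => a1 n) J1 J2) => n; ring.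
have hE : is_padic p (fun n => g3 n - a2 n) := padic_add hg3 (padic_opp ha2).
have hF : is_padic p (fun n => g3 n + a2 n) := padic_add hg3 ha2.
have hEF : is_padic p (fun n => (g3 n - a2 n) * (g3 n + a2 n)) := padic_mul hE hF.
have zQ : Zq p (fun n => (g3 n - a2 n) * (g3 n + a2 n)).
  apply: (dom' pr ha1 hEF _ na1).
  by apply: (Zq_comb (u := fun n => g3 n) (v := fun n => a2 n) J3 zK) => n; ring.
case: (domain pr hE hF zQ) => [E|F].
  have eb3 : Zd p b3 a1.
    apply: (dom' pr ha2 (padic_add hb3 (padic_opp ha1)) _ na2).
    by apply: (Zq_comb (u := fun n => -1) (v := fun n => a1 n) J3 E) => n; ring.
  have eb2 : Zd p b2 g1.
    apply: (dom' pr ha2 (padic_add hb2 (padic_opp hg1)) _ na2).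
    by apply: (Zq_comb (u := fun n => 1) (v := fun n => - b2 n) J2 E) => n; ring.
  have H : forall i j k, peq p (LA a1 a2 b2 b3 g1 g3 i j k) (Lstar a1 a2 g1 i j k).
    move=> i j k; rewrite Lstar_LA; apply: LA_peq => //; exact: Zd_refl.
  have [eta [rho [mu [lam [q1 [q2 [q3 [q4 [q5 [q6 q7]]]]]]]]]] :=
    final_star pr p1 p2 p5 na1 na2 ng1 H.
  exists eta, rho, mu, lam; do 5 (split; first done).
  by right; right; right; right.
have zb3 : Zq p (fun n => b3 n + a1 n).
  apply: (dom' pr ha2 (padic_add hb3 ha1) _ na2).
  by apply: (Zq_comb (u := fun n => -1) (v := fun n => a1 n) J3 F) => n; ring.
have zg1 : Zq p (fun n => b2 n + g1 n).
  apply: (dom' pr ha2 (padic_add hb2 hg1) _ na2).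
  by apply: (Zq_comb (u := fun n => -1) (v := fun n => b2 n) J2 F) => n; ring.
have H : forall i j k, peq p (LA a1 a2 b2 b3 g1 g3 i j k) (L4 a1 a2 b2 i j k).
  move=> i j k; rewrite L4_LA; apply: LA_peq; try exact: Zd_refl.
  - by apply: (Zq_ext zb3) => n; rewrite /popp; ring.
  - by apply: (Zq_ext zg1) => n; rewrite /popp; ring.
  - by apply: (Zq_ext F) => n; rewrite /popp; ring.
have [eta [rho [mu [lam [q1 [q2 [q3 [q4 [q5 [q6 q7]]]]]]]]]] :=
  final_4 pr p1 p2 p3 na1 na2 nb2 H.
exists eta, rho, mu, lam; do 5 (split; first done).
by right; right; right; left.
Qed.
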